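(* Let $G$ be a graph, let $n\equiv 0 \pmod 4$, and let $v$ be a vertex of $G$ with $\sigma_v(G)\subset\mathbb{Z}$. Let $T_v=\{(j,v):j\in\mathbb{Z}_n\}\subseteq V(\uparrow^{n}G)$, and let $X$ be the graph obtained from $\uparrow^{n}G$ by adding a matching $M$ (a set of pairwise vertex-disjoint edges) each of whose edges joins two vertices of $T_v$. Then $X$ has Laplacian perfect state transfer at time $\frac{\pi}{2}$ between the two end vertices of every edge of $M$. Moreover, $X$ is periodic, with period $\frac{\pi}{2}$, at every vertex of $T_v$ not incident to an edge of $M$.
   Context: All graphs are simple, undirected and unweighted. $\sigma_v(G)$ is the Laplacian eigenvalue support of $v$: the set of distinct eigenvalues $\lambda$ of the Laplacian $L=D-A$ of $G$ with $E_\lambda\mathbf{e}_v\neq\mathbf{0}$, $E_\lambda$ the orthogonal projection onto the $\lambda$-eigenspace. The blow-up $\uparrow^{n}G$ has vertex set $\mathbb{Z}_n\times V(G)$, with $(l,u)\sim(m,w)$ iff $u\sim w$ in $G$. For a graph with Laplacian $L$ and $U(t)=\exp(itL)$: Laplacian perfect state transfer between $a,b$ at time $\tau$ means $U(\tau)\mathbf{e}_a=\gamma\mathbf{e}_b$ for some $\gamma\in\mathbb{C}$; the graph is periodic at $a$ at time $\tau>0$ if $|U(\tau)_{a,a}|=1$. *)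

(* Defs.v *)
From HB Require Import structures.
From mathcomp Require Import all_boot all_order all_algebra.
From mathcomp Require Import all_classical all_reals all_analysis.
Set Implicit Arguments. Unset Strict Implicit. Unset Printing Implicit Defensive.
Import Order.TTheory GRing.Theory Num.Theory.
Import numFieldNormedType.Exports.
Local Open Scope ring_scope.

Definition simple_graph (T : finType) (e : rel T) : Prop :=
  (forall x y, e x y = e y x) /\ (forall x, e x x = false).

Definition laplacian (R : realType) (T : finType) (e : rel T) : 'M[R]_#|T| :=
  \matrix_(i, j)
    ((if i == j then (#|[set y | e (enum_val i) y]|)%:R else 0)
     - (if e (enum_val i) (enum_val j) then 1 else 0)).

(* exp(itL) = Cos(t,L) + i Sin(t,L), where (splitting the exponential series
   into even and odd terms; L is real)
   Cos(t,L) = sum_k (-1)^k t^(2k)/(2k)! L^(2k),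
   Sin(t,L) = sum_k (-1)^k t^(2k+1)/(2k+1)! L^(2k+1),
   each defined entrywise as the limit of the partial sums. *)
Definition cosM (R : realType) (m : nat) (t : R) (L : 'M[R]_m) : 'M[R]_m :=
  \matrix_(a, b) limn (series (fun k : nat =>
      (-1) ^+ k * t ^+ (2 * k) / ((2 * k)`!)%:R * (L ^+ (2 * k)) a b : R)).
Definition sinM (R : realType) (m : nat) (t : R) (L : 'M[R]_m) : 'M[R]_m :=
  \matrix_(a, b) limn (series (fun k : nat =>
      (-1) ^+ k * t ^+ (2 * k).+1 / ((2 * k).+1`!)%:R * (L ^+ (2 * k).+1) a b : R)).

(* Laplacian perfect state transfer from a to b at time tau:
   U(tau) e_a = gamma e_b for some complex gamma = gr + i gi,
   i.e. column a of U(tau) equals gamma times e_b. *)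
Definition lap_pst (R : realType) (T : finType) (e : rel T) (a b : T) (tau : R)
  : Prop :=
  let L := laplacian R e in
  exists gr gi : R, forall c : 'I_#|T|,
    cosM tau L c (enum_rank a) = (c == enum_rank b)%:R * gr /\
    sinM tau L c (enum_rank a) = (c == enum_rank b)%:R * gi.

Definition lap_periodic (R : realType) (T : finType) (e : rel T) (a : T) (tau : R)
  : Prop :=
  let L := laplacian R e in
  0 < tau /\
  Num.sqrt ((cosM tau L (enum_rank a) (enum_rank a)) ^+ 2
            + (sinM tau L (enum_rank a) (enum_rank a)) ^+ 2) = 1.

(* Orthogonal projection onto the lambda-eigenspace of a symmetric matrix A:
   with B a basis (as rows) of the eigenspace, E = B^T (B B^T)^-1 B. *)
Definition eigproj (R : realType) (m : nat) (A : 'M[R]_m) (lam : R) : 'M[R]_m :=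
  let B := row_base (eigenspace A lam) in
  B^T *m invmx (B *m B^T) *m B.

Definition lap_support (R : realType) (T : finType) (e : rel T) (v : T) (lam : R)
  : bool :=
  let L := laplacian R e in
  eigenvalue L lam && (eigproj L lam *m delta_mx (enum_rank v) (0 : 'I_1) != 0).

Definition blowup (n : nat) (T : finType) (e : rel T) : rel ('I_n * T) :=
  fun x y => e x.2 y.2.

(* A matching on the index set: symmetric, irreflexive, each index has at most
   one partner. The edge {j,k} of M joins (j,v) and (k,v). *)
Definition is_matching (n : nat) (m : rel 'I_n) : Prop :=
  (forall j k, m j k = m k j) /\ (forall j, m j j = false) /\
  (forall j k k', m j k -> m j k' -> k = k').

Definition blowup_matching (n : nat) (T : finType) (e : rel T) (v : T)
  (m : rel 'I_n) : rel ('I_n * T) :=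
  fun x y => @blowup n T e x y || [&& x.2 == v, y.2 == v & m x.1 y.1].

(* Main.v *)
Require Import Defs.
From HB Require Import structures.
From mathcomp Require Import all_boot all_order all_algebra.
From mathcomp Require Import all_classical all_reals all_analysis.
From mathcomp Require Import complex ring lra.
Import Order.TTheory GRing.Theory Num.Theory.
Import numFieldNormedType.Exports.
Local Open Scope ring_scope.
Set Implicit Arguments. Unset Strict Implicit. Unset Printing Implicit Defensive.
Definition Lop (R : realType) (V : finType) (adj : rel V) (f : V -> R) (x : V) : R :=
  \sum_y (adj x y)%:R * (f x - f y).

Lemma deg_sum (R : realType) (V : finType) (adj : rel V) x :
  (#|[set y | adj x y]|%:R : R) = \sum_y (adj x y)%:R.
Proof.
rewrite -sum1_card natr_sum big_mkcond /=; apply: eq_bigr => y _.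
by rewrite inE; case: (adj x y).
Qed.

Lemma lap_col (R : realType) (V : finType) (adj : rel V) (w : 'cV[R]_#|V|) i :
  (laplacian R adj *m w) i 0 = Lop adj (fun x => w (enum_rank x) 0) (enum_val i).
Proof.
rewrite mxE /Lop (reindex (@enum_val V V)) /=; last exact: onW_bij (enum_val_bij V).
rewrite enum_valK.
under eq_bigr do rewrite mxE mulrBl.
under [RHS]eq_bigr do rewrite enum_valK mulrBr.
rewrite !sumrB; congr (_ - _); last first.
  by apply: eq_bigr => j _; case: (adj _ _); rewrite ?mul1r ?mul0r.
rewrite (bigD1 i) //= eqxx big1 ?addr0; last first.
  by move=> j /negbTE; rewrite eq_sym => ->; rewrite mul0r.
rewrite deg_sum mulr_suml (reindex (@enum_val V V)) /=; last exact: onW_bij (enum_val_bij V).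
by [].
Qed.
Local Open Scope classical_set_scope.
Local Open Scope ring_scope.

Lemma cvg_seq_sum (R : realType) (I : Type) (s : seq I) (u : I -> nat -> R) (l : I -> R) :
  (forall i, u i @ \oo --> l i) ->
  (fun n => \sum_(i <- s) u i n) @ \oo --> \sum_(i <- s) l i.
Proof.
move=> h; elim: s => [|i s IH].
  under eq_fun do rewrite big_nil.
  by rewrite big_nil; exact: cvg_cst.
under eq_fun do rewrite big_cons.
by rewrite big_cons; apply: cvgD => //; exact: h.
Qed.

Definition colf (R : realType) (V : finType) (f : V -> R) : 'cV[R]_#|V| :=
  \col_i f (enum_val i).

Lemma evo_pow (R : realType) (V : finType) (adj : rel V) (mu : R) (f : V -> R) :
  (forall x, Lop adj f x = mu * f x) ->
  forall k, (laplacian R adj) ^+ k *m colf f = mu ^+ k *: colf f.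
Proof.
move=> hf.
have h1 : laplacian R adj *m colf f = mu *: colf f.
  apply/matrixP => i j; rewrite (ord1 j) lap_col !mxE.
  have -> : (fun x => colf f (enum_rank x) 0) = f.
    by apply/funext => x; rewrite mxE enum_rankK.
  exact: hf.
elim=> [|k IH]; first by rewrite expr0 scale1r mul1mx.
by rewrite exprS -mulmxE -mulmxA IH -scalemxAr h1 scalerA exprSr.
Qed.

Lemma evo (R : realType) (V : finType) (adj : rel V) (a : V) (t : R)
  (s : seq (R * (V -> R))) :
  (forall p, p \in s -> forall x, Lop adj p.2 x = p.1 * p.2 x) ->
  (forall x, \sum_(p <- s) p.2 x = (x == a)%:R) ->
  forall c, cosM t (laplacian R adj) c (enum_rank a)
              = \sum_(p <- s) cos (t * p.1) * p.2 (enum_val c) /\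
            sinM t (laplacian R adj) c (enum_rank a)
              = \sum_(p <- s) sin (t * p.1) * p.2 (enum_val c).
Proof.
move=> hs hsum c; set L := laplacian R adj.
have dE : delta_mx (enum_rank a) 0 = \sum_(p <- s) colf p.2.
  apply/matrixP => i j; rewrite (ord1 j) summxE !mxE eqxx andbT.
  under eq_bigr do rewrite mxE.
  by rewrite hsum -(inj_eq (@enum_rank_inj V)) enum_valK.
have entry k : (L ^+ k) c (enum_rank a) = \sum_(p <- s) p.1 ^+ k * p.2 (enum_val c).
  have -> : (L ^+ k) c (enum_rank a) = (col (enum_rank a) (L ^+ k)) c 0 by rewrite mxE.
  rewrite colE dE mulmx_sumr summxE big_seq [RHS]big_seq.
  by apply: eq_bigr => p ps; rewrite (evo_pow (hs p ps)) !mxE.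
split; rewrite mxE; apply: (cvg_lim (@Rhausdorff R)).
- have -> : series (fun k => (-1) ^+ k * t ^+ (2 * k) / ((2 * k)`!)%:R
                    * (L ^+ (2 * k)) c (enum_rank a))
     = (fun n => \sum_(p <- s) series (cos_coeff' (t * p.1)) n * p.2 (enum_val c)).
    apply/funext => n; rewrite /series /=.
    under eq_bigr do rewrite entry mulr_sumr.
    rewrite exchange_big /=; apply: eq_bigr => p _; rewrite mulr_suml.
    apply: eq_bigr => k _.
    rewrite /cos_coeff' exprMn -mul2n -exprnP; ring.
  apply: cvg_seq_sum => p; apply: cvgMr_tmp; exact: cvg_cos_coeff'.
- have -> : series (fun k => (-1) ^+ k * t ^+ (2 * k).+1 / ((2 * k).+1`!)%:R
                    * (L ^+ (2 * k).+1) c (enum_rank a))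
     = (fun n => \sum_(p <- s) series (sin_coeff' (t * p.1)) n * p.2 (enum_val c)).
    apply/funext => n; rewrite /series /=.
    under eq_bigr do rewrite entry mulr_sumr.
    rewrite exchange_big /=; apply: eq_bigr => p _; rewrite mulr_suml.
    apply: eq_bigr => k _.
    rewrite /sin_coeff' exprMn -mul2n -exprnP; ring.
  apply: cvg_seq_sum => p; apply: cvgMr_tmp; exact: cvg_sin_coeff'.
Qed.

Section Spec.
Variable R : realType.

Lemma vec0 N (w : 'cV[R]_N) : w^T *m w = 0 -> w = 0.
Proof.
move=> /matrixP /(_ 0 0); rewrite !mxE => h.
have h' : forall i, true -> w i 0 * w i 0 = 0.
  apply: psumr_eq0P => [i _|]; first by rewrite -expr2; exact: sqr_ge0.
  by apply: etrans h; apply: eq_bigr => i _; rewrite mxE.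
apply/matrixP => i j; rewrite (ord1 j) mxE.
by have /eqP := h' i isT; rewrite mulf_eq0 orbb => /eqP.
Qed.

Lemma sym_ker N (S : 'M[R]_N) (x : 'cV[R]_N) :
  S^T = S -> S *m (S *m x) = 0 -> S *m x = 0.
Proof.
move=> hS h; apply: vec0.
by rewrite trmx_mul hS -mulmxA h mulmx0.
Qed.

Lemma sym_root_real N (L : 'M[R]_N) : L^T = L ->
  forall z : R[i], root (char_poly (map_mx (real_complex R) L)) z -> z \is Num.real.
Proof.
move=> Ls z; rewrite -eigenvalue_root_char => /eigenvalueP [x xL xn0].
set Lc := map_mx (real_complex R) L in xL.
pose xs := (map_mx (fun c : R[i] => c^*) x)^T.
have Lreal : forall i j, (Lc i j)^* = Lc i j.
  move=> i j; apply: conj_Creal; apply/complex_realP; exists (L i j); by rewrite mxE.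
have Lsym : forall i j, Lc i j = Lc j i.
  by move=> i j; rewrite !mxE -[in RHS]Ls mxE.
pose q := (x *m Lc *m xs) 0 0; pose d := (x *m xs) 0 0.
have hq : q = z * d by rewrite /q xL -scalemxAl mxE.
have qE : q = \sum_i \sum_j x 0 i * Lc i j * (x 0 j)^*.
  rewrite /q mxE exchange_big; apply: eq_bigr => j _; rewrite !mxE mulr_suml.
  by apply: eq_bigr => i _; rewrite !mxE.
have hqc : q^* = q.
  rewrite qE rmorph_sum exchange_big; apply: eq_bigr => i _; rewrite rmorph_sum.
  apply: eq_bigr => j _; rewrite !rmorphM /= conjCK Lreal Lsym.
  by ring.
have dE : d = \sum_i x 0 i * (x 0 i)^* by rewrite /d mxE; apply: eq_bigr => i _; rewrite !mxE.
have d_ge0 : 0 <= d by rewrite dE sumr_ge0 // => i _; exact: mul_conjC_ge0.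
have d_neq0 : d != 0.
  apply/eqP => d0; apply/negP: xn0; apply/negPn/eqP/matrixP => i j; rewrite (ord1 i) mxE.
  have := (@psumr_eq0P _ _ xpredT _ (fun k _ => mul_conjC_ge0 (x 0 k))); rewrite -dE => /(_ d0 j isT).
  by move/eqP; rewrite mul_conjC_eq0 => /eqP.
have dreal : d^* = d by apply: conj_Creal; exact: ger0_real.
have : z^* * d = z * d.
  have := congr1 (fun c => c^*) hq; rewrite /= hqc rmorphM /= dreal => <-.
  by rewrite -hq.
by move/(mulIf d_neq0) => hz; rewrite CrealE hz.
Qed.

End Spec.

Section Decomp.
Variable R : realType.

Definition is_decomp N (L : 'M[R]_N) (x : 'cV[R]_N) (s : seq (R * 'cV[R]_N)) :=
  [/\ uniq (map fst s), (forall q, q \in s -> L *m q.2 = q.1 *: q.2) & x = \sum_(q <- s) q.2].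

Lemma map_fst_filter N (s : seq (R * 'cV[R]_N)) r (g : R * 'cV[R]_N -> 'cV[R]_N) :
  map fst [seq (pr.1, g pr) | pr <- s & pr.1 != r] = [seq l <- map fst s | l != r].
Proof. by elim: s => //= pr s IH; case: ifP => //= _; rewrite IH. Qed.

Lemma decomp N (L : 'M[R]_N.+1) : L^T = L ->
  forall p : {poly R}, p != 0 ->
  (forall z : R[i], root (map_poly (real_complex R) p) z -> z \is Num.real) ->
  forall x, horner_mx L p *m x = 0 -> exists s, is_decomp L x s.
Proof.
move=> Ls p; have [k] := ubnP (size p); elim: k p => // k IH p szp pn0 hroots x hx.
have [sz1|sz2] := leqP (size p) 1.
  exists [::]; split => //; rewrite big_nil.
  move: hx; rewrite (size1_polyC sz1) horner_mx_C mul_scalar_mx => /eqP.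
  rewrite scaler_eq0 => /orP [|/eqP //].
  by move=> /eqP h0; move: pn0; rewrite (size1_polyC sz1) h0 eqxx.
have [z rz] : exists z, root (map_poly (real_complex R) p) z.
  by apply/closed_rootP; rewrite size_map_poly gtn_eqF.
have /complex_realP [r zr] := hroots z rz.
have rp : root p r.
  by move: rz; rewrite zr /root horner_map fmorph_eq0.
have [q pq] := factor_theorem _ _ rp.
have qn0 : q != 0 by apply: contraNneq pn0; rewrite pq => ->; rewrite mul0r.
have szq : (size q < k)%N.
  by move: szp; rewrite pq size_Mmonic ?monicXsubC // size_XsubC addn2 /= ltnS.
have qroots : forall z, root (map_poly (real_complex R) q) z -> z \is Num.real.
  by move=> w rw; apply: hroots; rewrite pq rmorphM rootM rw.
set S := L - r%:M.
have SS : S^T = S by rewrite /S linearB /= Ls tr_scalar_mx.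
have hy : horner_mx L q *m (S *m x) = 0.
  rewrite mulmxA -hx pq rmorphM /= rmorphB /= horner_mx_X horner_mx_C mulmxE.
  by [].
have [s' [us' es' ys']] := IH q szq qn0 qroots (S *m x) hy.
pose z0 := \sum_(pr <- s' | pr.1 != r) (pr.1 - r)^-1 *: pr.2.
have Sz : S *m z0 = \sum_(pr <- s' | pr.1 != r) pr.2.
  rewrite mulmx_sumr big_seq_cond [RHS]big_seq_cond; apply: eq_bigr => pr /andP [prs prr].
  rewrite -scalemxAr /S mulmxBl es' // mul_scalar_mx -scalerBl scalerA mulVf ?scale1r //.
  by rewrite subr_eq0.
have SY : S *m (\sum_(pr <- s' | pr.1 == r) pr.2) = 0.
  rewrite mulmx_sumr big_seq_cond big1 // => pr /andP [prs /eqP prr].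
  by rewrite /S mulmxBl es' // mul_scalar_mx prr subrr.
have Sxz : S *m (x - z0) = 0.
  apply: sym_ker => //; rewrite mulmxBr Sz.
  have -> : S *m x - \sum_(pr <- s' | pr.1 != r) pr.2 = \sum_(pr <- s' | pr.1 == r) pr.2.
    by rewrite ys' (bigID (fun pr => pr.1 == r)) /= addrK.
  exact: SY.
exists ((r, x - z0) :: [seq (pr.1, (pr.1 - r)^-1 *: pr.2) | pr <- s' & pr.1 != r]).
split.
- rewrite /= map_fst_filter mem_filter eqxx /=; exact: filter_uniq.
- move=> qq; rewrite inE => /orP [/eqP -> /=|].
    by move/eqP: Sxz; rewrite /S mulmxBl mul_scalar_mx subr_eq0 => /eqP.
  case/mapP => pr; rewrite mem_filter => /andP [_ prs] -> /=.
  by rewrite -scalemxAr es' // !scalerA mulrC.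
- by rewrite big_cons big_map big_filter /= subrK.
Qed.

Lemma spectral_decomp N (L : 'M[R]_N) : L^T = L -> forall x, exists s, is_decomp L x s.
Proof.
case: N L => [|N] L Ls x.
  by exists [::]; split => //; rewrite big_nil [x]flatmx0.
apply: (decomp Ls (p := char_poly L)).
- exact: monic_neq0 (char_poly_monic L).
- by move=> z; rewrite map_char_poly; apply: sym_root_real.
- by rewrite Cayley_Hamilton mul0mx.
Qed.

End Decomp.

Lemma uniq_map_eq (A B : eqType) (f : A -> B) (s : seq A) x y :
  uniq (map f s) -> x \in s -> y \in s -> f x = f y -> x = y.
Proof.
elim: s => //= a s IH /andP [fa us]; rewrite !inE.
case/orP => [/eqP ->|xs]; case/orP => [/eqP -> //|ys].
- by move=> e; move: fa; rewrite e map_f.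
- by move=> e; move: fa; rewrite -e map_f.
- exact: IH.
Qed.

Section GDec.
Variable R : realType.

Lemma BBt_unit m n (B : 'M[R]_(m, n)) : row_free B -> B *m B^T \in unitmx.
Proof.
move=> fB; rewrite unitmxE unitfE; apply/negP => /det0P [w wn0 hw].
have h : (w *m B)^T^T *m (w *m B)^T = 0.
  by rewrite trmxK trmx_mul mulmxA -(mulmxA w) hw mul0mx.
have /eqP := vec0 h; rewrite trmx_eq0 mulmx_free_eq0 //.
by apply/negP.
Qed.

Lemma lap_sym (T : finType) (e : rel T) : simple_graph e -> (laplacian R e)^T = laplacian R e.
Proof.
move=> [esym _]; apply/matrixP => i j; rewrite !mxE esym.
by case: eqVneq => [->|]; rewrite ?eqxx // eq_sym => /negbTE ->.
Qed.

Lemma trZ (a : R) m n (w : 'M[R]_(m, n)) : (a *: w)^T = a *: w^T.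
Proof. by apply/matrixP => i j; rewrite !mxE. Qed.

Lemma G_decomp (T : finType) (e : rel T) (v : T) :
  simple_graph e ->
  (forall lam : R, lap_support e v lam -> lam \is a Num.int) ->
  exists sG : seq (R * (T -> R)),
    [/\ (forall p, p \in sG -> p.1 \is a Num.int),
        (forall p, p \in sG -> forall u, Lop e p.2 u = p.1 * p.2 u) &
        (forall u, \sum_(p <- sG) p.2 u = (u == v)%:R)].
Proof.
move=> sg hsupp; set L := laplacian R e.
have Ls : L^T = L by exact: lap_sym.
pose x : 'cV[R]_#|T| := delta_mx (enum_rank v) 0.
have [s [us es xs]] := spectral_decomp Ls x.
have uss : uniq s := map_uniq us.
have orth : forall q q', q \in s -> q' \in s -> q != q' -> q.2^T *m q'.2 = 0.
  move=> q q' qs q's qq'.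
  have hne : q.1 != q'.1.
    by apply: contra qq' => /eqP h; apply/eqP; exact: (uniq_map_eq us qs q's h).
  have e1 : q.1 *: (q.2^T *m q'.2) = q'.1 *: (q.2^T *m q'.2).
    rewrite [LHS]scalemxAl -trZ -es // trmx_mul Ls -mulmxA es //.
    by rewrite -scalemxAr.
  move/eqP: e1; rewrite -subr_eq0 -scalerBl scaler_eq0 subr_eq0 (negbTE hne) /=.
  by move/eqP.
have selfdot : forall q, q \in s -> q.2^T *m x = q.2^T *m q.2.
  move=> q qs; rewrite xs mulmx_sumr (bigD1_seq q) //= big1_seq ?addr0 //.
  by move=> q' /andP [q'q q's]; apply: orth => //; rewrite eq_sym.
have zero : forall q, q \in s -> ~~ (q.1 \is a Num.int) -> q.2 = 0.
  move=> q qs qni; apply: vec0; rewrite -selfdot //.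
  have [->|q2n0] := eqVneq q.2 0; first by rewrite trmx0 mul0mx.
  have ev : eigenvalue L q.1.
    apply/eigenvalueP; exists q.2^T; last by rewrite trmx_eq0.
    by rewrite -{1}Ls -trmx_mul es // trZ.
  have nsupp : ~~ lap_support e v q.1 by apply: contra qni; exact: hsupp.
  move: nsupp; rewrite /lap_support -/L ev /= negbK => /eqP hP.
  set B := row_base (eigenspace L q.1) in hP.
  have hB : B *m x = 0.
    have <- : B *m eigproj L q.1 = B.
      rewrite /eigproj -/B !mulmxA mulmxV ?mul1mx //.
      exact: BBt_unit (row_base_free _).
    by rewrite -mulmxA hP mulmx0.
  have : (q.2^T <= B)%MS.
    by rewrite eq_row_base; apply/eigenspaceP; rewrite -{1}Ls -trmx_mul es // trZ.
  by case/submxP => D ->; rewrite -mulmxA hB mulmx0.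
exists [seq (q.1, fun u : T => (q.2 : 'cV[R]_#|T|) (enum_rank u) 0) | q : R * 'cV[R]_#|T| <- s & q.1 \is a Num.int].
split.
- by move=> p /mapP [q]; rewrite mem_filter => /andP [qi _] ->.
- move=> p /mapP [q]; rewrite mem_filter => /andP [_ qs] -> u /=.
  by rewrite -{1}(enum_rankK u) -lap_col es // mxE.
- move=> u; rewrite big_map big_filter /=.
  rewrite big_mkcond /=.
  have -> : (u == v)%:R = x (enum_rank u) 0 by rewrite mxE (inj_eq enum_rank_inj) eqxx andbT.
  rewrite xs summxE big_seq [RHS]big_seq; apply: eq_bigr => q qs.
  by case: ifP => // /negbT /(zero q qs) ->; rewrite mxE.
Qed.

End GDec.

Section XLevel.
Variables (R : realType) (T : finType) (e : rel T) (n : nat) (v : T) (m : rel 'I_n).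
Hypothesis eirr : forall x, e x x = false.

Local Notation adj := (blowup_matching e v m).

Lemma adj_split l u l' u' :
  ((adj (l, u) (l', u'))%:R : R) = (e u u')%:R + ([&& u == v, u' == v & m l l'])%:R.
Proof.
rewrite /blowup_matching /blowup /=.
case: (eqVneq u v) => [->|uv]; case: (eqVneq u' v) => [->|u'v] /=;
  rewrite ?eirr ?add0r ?orbF ?addr0 //.
Qed.

Lemma sum_pair (F : 'I_n * T -> R) : \sum_y F y = \sum_l \sum_u F (l, u).
Proof. by rewrite pair_bigA; apply: eq_bigr => -[]. Qed.

Lemma LopX_lift (g : T -> R) lam c :
  (forall u, Lop e g u = lam * g u) ->
  forall y, Lop adj (fun y => g y.2 * c) y = (n%:R * lam) * (g y.2 * c).
Proof.
move=> hg [l u]; rewrite /Lop sum_pair /=.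
have inner : forall l', \sum_u' (adj (l, u) (l', u'))%:R * (g u * c - g u' * c)
                       = c * (lam * g u).
  move=> l'; rewrite -(hg u) /Lop mulr_sumr; apply: eq_bigr => u' _.
  rewrite adj_split.
  case: (eqVneq u v) => [->|uv]; case: (eqVneq u' v) => [->|u'v] /=;
    rewrite ?eirr ?subrr ?mulr0 ?mul0r ?add0r ?addr0 //; ring.
under eq_bigr do rewrite inner.
by rewrite sumr_const card_ord -mulr_natl; ring.
Qed.

Definition dvG : R := \sum_u (e v u)%:R.

Lemma LopX_h (h : 'I_n -> R) kappa :
  \sum_l h l = 0 ->
  (forall l, \sum_l' (m l l')%:R * (h l - h l') = kappa * h l) ->
  forall y, Lop adj (fun y => h y.1 * (y.2 == v)%:R) y
            = (n%:R * dvG + kappa) * (h y.1 * (y.2 == v)%:R).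
Proof.
move=> hsum hk [l u]; rewrite /Lop sum_pair /=.
case: (eqVneq u v) => [->|uv].
  have inner : forall l', \sum_u' (adj (l, v) (l', u'))%:R
                   * (h l * true%:R - h l' * (u' == v)%:R)
                 = dvG * h l + (m l l')%:R * (h l - h l').
    move=> l'; rewrite (bigD1 v) //= adj_split eqxx (eirr v) /= add0r !mulr1.
    rewrite /dvG [X in X * h l](bigD1 v) //= (eirr v) add0r mulr_suml addrC; congr (_ + _).
    apply: eq_bigr => u' /negbTE u'v; rewrite adj_split u'v eqxx andbF /=.
    by rewrite mulr0 subr0 addr0.
  under eq_bigr do rewrite inner.
  by rewrite big_split /= sumr_const card_ord hk -mulr_natl; ring.
have inner : forall l', \sum_u' (adj (l, u) (l', u'))%:R
                 * (h l * false%:R - h l' * (u' == v)%:R)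
               = - ((e u v)%:R * h l').
  move=> l'; rewrite (bigD1 v) //= adj_split (negbTE uv) eqxx /= addr0.
  rewrite big1 ?addr0; first by ring.
  by move=> u' /negbTE u'v; rewrite adj_split u'v (negbTE uv) /= !mulr0 subrr mulr0.
under eq_bigr do rewrite inner.
by rewrite sumrN -mulr_sumr hsum !mulr0 oppr0.
Qed.

Hypothesis mm : is_matching m.

Lemma Lm_partner l l0 (h : 'I_n -> R) : m l l0 ->
  \sum_l' (m l l')%:R * (h l - h l') = h l - h l0.
Proof.
have [mS [mI mU]] := mm.
move=> ml0; rewrite (bigD1 l0) //= ml0 mul1r big1 ?addr0 // => l' nl'.
case ml': (m l l'); last by rewrite mul0r.
by move: nl'; rewrite (mU _ _ _ ml' ml0) eqxx.
Qed.

Lemma Lm_pair j k (a b c : R) : m j k -> j != k -> forall l,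
  \sum_l' (m l l')%:R * ((a * (l == j)%:R + b * (l == k)%:R + c)
                          - (a * (l' == j)%:R + b * (l' == k)%:R + c))
  = (a - b) * ((l == j)%:R - (l == k)%:R).
Proof.
have [mS [mI mU]] := mm.
move=> mjk jk l; have mkj : m k j by rewrite mS.
have jkF : (j == k) = false by exact: negbTE.
have kjF : (k == j) = false by rewrite eq_sym.
case: (pickP (m l)) => [l0 ml0 | nol].
  rewrite (Lm_partner (fun l => a * (l == j)%:R + b * (l == k)%:R + c) ml0).
  case: (eqVneq l j) => [lj|lj].
    subst l; have -> : l0 = k by exact: mU _ _ _ ml0 mjk.
    by rewrite !eqxx ?jkF ?kjF /=; ring.
  case: (eqVneq l k) => [lk|lk].
    subst l; have -> : l0 = j by exact: mU _ _ _ ml0 mkj.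
    by rewrite !eqxx ?jkF ?kjF /=; ring.
  have l0j : (l0 == j) = false.
    apply/negbTE/eqP => l0j; subst l0; move/eqP: lk; apply.
    by apply: mU mjk; rewrite mS.
  have l0k : (l0 == k) = false.
    apply/negbTE/eqP => l0k; subst l0; move/eqP: lj; apply.
    by apply: mU mkj; rewrite mS.
  by rewrite l0j l0k /=; ring.
have lj : (l == j) = false.
  by apply/negbTE/eqP => lj; subst l; move: (nol k); rewrite mjk.
have lk : (l == k) = false.
  by apply/negbTE/eqP => lk; subst l; move: (nol j); rewrite mkj.
rewrite lj lk big1 /=; first by ring.
by move=> l' _; rewrite nol mul0r.
Qed.

Lemma Lm_single j (a c : R) : (forall k, ~~ m j k) -> forall l,
  \sum_l' (m l l')%:R * ((a * (l == j)%:R + c) - (a * (l' == j)%:R + c)) = 0.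
Proof.
have [mS [mI mU]] := mm.
move=> hj l; case: (pickP (m l)) => [l0 ml0 | nol].
  rewrite (Lm_partner (fun l => a * (l == j)%:R + c) ml0).
  have lj : (l == j) = false.
    by apply/negbTE/eqP => lj; subst l; move: (hj l0); rewrite ml0.
  have l0j : (l0 == j) = false.
    by apply/negbTE/eqP => l0j; subst l0; move: (hj l); rewrite mS ml0.
  by rewrite lj l0j /=; ring.
by rewrite big1 // => l' _; rewrite nol mul0r.
Qed.

Lemma sum_delta (j : 'I_n) : \sum_l ((l == j)%:R : R) = 1.
Proof. by rewrite (bigD1 j) //= eqxx big1 ?addr0 // => l /negbTE ->. Qed.

End XLevel.

Section Trig.
Variable R : realType.

Lemma trig_int (w : int) : cos ((pi *+ 2) * w%:~R) = 1 :> R /\ sin ((pi *+ 2) * w%:~R) = 0 :> R.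
Proof.
have hn : forall k : nat, cos ((pi *+ 2) * k%:R) = 1 :> R /\ sin ((pi *+ 2) * k%:R) = 0 :> R.
  elim=> [|k [IHc IHs]]; first by rewrite mulr0 cos0 sin0.
  have -> : (k.+1)%:R = k%:R + 1 :> R by rewrite mulrSr.
  by rewrite mulrDr mulr1 cosD2pi sinD2pi.
case: w => k; first exact: hn.
by rewrite NegzE mulrNz mulrN cosN sinN (hn k.+1).1 (hn k.+1).2 oppr0.
Qed.

Lemma trig_main (n : nat) (x : R) : (4 %| n)%N -> x \is a Num.int ->
  [/\ cos (pi / 2 * (n%:R * x)) = 1, sin (pi / 2 * (n%:R * x)) = 0,
      cos (pi / 2 * (n%:R * x + 2)) = -1 & sin (pi / 2 * (n%:R * x + 2)) = 0].
Proof.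
move=> /dvdnP [q ->] /intrP [z ->].
have e1 : pi / 2 * ((q * 4)%:R * z%:~R) = (pi *+ 2) * (q%:Z * z)%:~R :> R.
  rewrite intrM natrM /=; rewrite -mulr_natr; by field.
have e2 : pi / 2 * ((q * 4)%:R * z%:~R + 2) = (pi *+ 2) * (q%:Z * z)%:~R + pi :> R.
  rewrite intrM natrM /=; rewrite -mulr_natr; by field.
have [c1 s1] := trig_int (q%:Z * z).
by rewrite e1 e2 cosDpi sinDpi c1 s1 oppr0.
Qed.

End Trig.

Lemma sum_h2 (R : realType) n (j k : 'I_n) (a b c : R) :
  \sum_l (a * (l == j)%:R + b * (l == k)%:R + c) = a + b + c * n%:R.
Proof.
rewrite !big_split /= -!mulr_sumr !sum_delta sumr_const card_ord.
by rewrite !mulr1 mulr_natr.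
Qed.

Lemma sum_h1 (R : realType) n (j : 'I_n) (a c : R) :
  \sum_l (a * (l == j)%:R + c) = a + c * n%:R.
Proof.
rewrite !big_split /= -!mulr_sumr !sum_delta sumr_const card_ord.
by rewrite !mulr1 mulr_natr.
Qed.

Unset Implicit Arguments.
Local Close Scope classical_set_scope.
Local Open Scope ring_scope.

Theorem theorem10 (R : realType) (T : finType) (e : rel T) (n : nat) (v : T)
  (m : rel 'I_n) :
  simple_graph e ->
  (4 %| n)%N ->
  (forall lam : R, lap_support e v lam -> lam \is a Num.int) ->
  is_matching m ->
  (forall j k : 'I_n, m j k ->
     lap_pst (blowup_matching e v m) (j, v) (k, v) (pi / 2 : R)) /\
  (forall j : 'I_n, (forall k, ~~ m j k) ->
     lap_periodic (blowup_matching e v m) (j, v) (pi / 2 : R)).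
Proof.
move=> sg n4 hsupp mm.
have [esym eirr] := sg.
have [mS [mI mU]] := mm.
have [sG [sGi sGe sGs]] := G_decomp sg hsupp.
have dvi : dvG R e v \is a Num.int by apply: rpred_sum => u _; exact: rpred_nat.
have [c0 s0 c2 s2] := trig_main n4 dvi.
set t := (pi / 2 : R) in c0 s0 c2 s2 *.
pose sGX := [seq (n%:R * p.1, fun y : 'I_n * T => p.2 y.2 * n%:R^-1) | p <- sG].
have sGXe : forall p, p \in sGX -> forall y,
    Lop (blowup_matching e v m) p.2 y = p.1 * p.2 y.
  by move=> p /mapP [q qs ->] y /=; exact: LopX_lift (sGe q qs) y.
have sGXs : forall y : 'I_n * T, \sum_(p <- sGX) p.2 y = (y.2 == v)%:R * n%:R^-1.
  by move=> y; rewrite big_map -mulr_suml sGs.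
have sGXc : forall y : 'I_n * T,
    \sum_(p <- sGX) cos (t * p.1) * p.2 y = (y.2 == v)%:R * n%:R^-1.
  move=> y; rewrite -sGXs !big_map big_seq [RHS]big_seq; apply: eq_bigr => q qs /=.
  by have [-> _ _ _] := trig_main n4 (sGi q qs); rewrite mul1r.
have sGXsn : forall y : 'I_n * T, \sum_(p <- sGX) sin (t * p.1) * p.2 y = 0.
  move=> y; rewrite big_map big_seq big1 // => q qs /=.
  by have [_ -> _ _] := trig_main n4 (sGi q qs); rewrite mul0r.
have n0of : forall j : 'I_n, n%:R != 0 :> R.
  by move=> j; rewrite pnatr_eq0 -lt0n; apply: leq_ltn_trans (ltn_ord j).
split.
- move=> j k mjk.
  have jk : j != k by apply: contraTneq mjk => ->; rewrite mI.
  have n0 := n0of j.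
  pose h2 := fun l : 'I_n => 2^-1 * (l == j)%:R + (- 2^-1) * (l == k)%:R + (0 : R).
  pose h3 := fun l : 'I_n => 2^-1 * (l == j)%:R + 2^-1 * (l == k)%:R + (- n%:R^-1 : R).
  pose s := sGX ++ [:: (n%:R * dvG R e v + 2, fun y : 'I_n * T => h2 y.1 * (y.2 == v)%:R);
                       (n%:R * dvG R e v + 0, fun y : 'I_n * T => h3 y.1 * (y.2 == v)%:R)].
  have se : forall p, p \in s -> forall y,
      Lop (blowup_matching e v m) p.2 y = p.1 * p.2 y.
    move=> p; rewrite mem_cat => /orP [/sGXe //|]; rewrite !inE => /orP [] /eqP -> y /=.
      apply: LopX_h => // [|l]; first by rewrite /h2 sum_h2; field.
      by rewrite /h2 (Lm_pair mm) //; field.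
    apply: LopX_h => // [|l]; first by rewrite /h3 sum_h2; field.
    by rewrite /h3 (Lm_pair mm) //; field.
  have ss : forall y, \sum_(p <- s) p.2 y = (y == (j, v))%:R.
    move=> [l u]; rewrite big_cat /= sGXs !big_cons big_nil /= addr0 xpair_eqE.
    by rewrite /h2 /h3; case: (l == j); case: (l == k); case: (u == v) => /=; field.
  exists 1, 0 => c.
  have [hc hs] := evo t se ss c.
  rewrite hc hs !big_cat /= sGXc sGXsn !big_cons !big_nil /= !addr0 c2 s2 c0 s0.
  have -> : (c == enum_rank (k, v)) = (enum_val c == (k, v)).
    by rewrite -(inj_eq enum_rank_inj) enum_valK.
  case: (enum_val c) => l u; rewrite xpair_eqE /= !mul0r !addr0 mulr0; split => //.
  by rewrite /h2 /h3; case: (l == j); case: (l == k); case: (u == v) => /=; field.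
- move=> j hj.
  have n0 := n0of j.
  pose h1 := fun l : 'I_n => 1 * (l == j)%:R + (- n%:R^-1 : R).
  pose s := sGX ++ [:: (n%:R * dvG R e v + 0, fun y : 'I_n * T => h1 y.1 * (y.2 == v)%:R)].
  have se : forall p, p \in s -> forall y,
      Lop (blowup_matching e v m) p.2 y = p.1 * p.2 y.
    move=> p; rewrite mem_cat => /orP [/sGXe //|]; rewrite !inE => /eqP -> y /=.
    apply: LopX_h => // [|l]; first by rewrite /h1 sum_h1; field.
    by rewrite /h1 (Lm_single mm) //; ring.
  have ss : forall y, \sum_(p <- s) p.2 y = (y == (j, v))%:R.
    move=> [l u]; rewrite big_cat /= sGXs !big_cons big_nil /= addr0 xpair_eqE.
    by rewrite /h1; case: (l == j); case: (u == v) => /=; field.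
  split; first by have /andP [] := @pihalf_02 R.
  have [hc hs] := evo t se ss (enum_rank (j, v)).
  rewrite hc hs !big_cat /= sGXc sGXsn !big_cons !big_nil /= !addr0 c0 s0 enum_rankK /=.
  rewrite eqxx /h1 eqxx /= !mul0r addr0.
  have -> : 1 / n%:R + 1 * ((1 * 1 - n%:R^-1) * 1) = 1 :> R by field.
  by rewrite expr1n expr0n addr0 sqrtr1.
Qed.
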